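(* Let $G$ be a $2$-edge-connected cubic multigraph (loopless) of order $n$ such that there is exactly one pair of vertices $\{u,v\}$ joined by more than one edge, and they are joined by exactly two edges, and such that $G$ is claw-free and diamond-free. Then $\gamma_P(G) \le (n-2)/6$.
   Context: A multigraph is claw-free (resp. diamond-free) if its underlying simple graph has no induced subgraph isomorphic to $K_{1,3}$ (resp. to the diamond $K_4-e$). A multigraph is cubic if every vertex is incident with exactly three edges (counting multiplicity). For $S \subseteq V(G)$: initially all vertices of $S$ and their neighbors are observed; then, repeatedly, any vertex that is the only unobserved neighbor of some observed vertex becomes observed. $S$ is a power dominating set if eventually all vertices are observed; $\gamma_P(G)$ is the minimum size of a power dominating set. *)

(* Defs.v *)
From mathcomp Require Import all_boot.
From mathcomp Require Import boolp.
Set Implicit Arguments. Unset Strict Implicit. Unset Printing Implicit Defensive.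

(* A finite multigraph on vertex type T is given by its edge-multiplicity
   function m : T -> T -> nat (m x y = number of edges joining x and y). *)
Section Multigraph.
Variable T : finType.
Implicit Types (m : T -> T -> nat) (S X : {set T}).

Definition symmetric_mult m := forall x y, m x y = m y x.
Definition loopless m := forall x, m x x = 0.

Definition adj m : rel T := fun x y => (x != y) && (0 < m x y).

Definition cubic m := forall x, \sum_(y : T) m x y = 3.

Definition connected_mg m := forall x y : T, connect (adj m) x y.

Definition remove_edge m (a b : T) : T -> T -> nat :=
  fun x y => if ((x == a) && (y == b)) || ((x == b) && (y == a))
             then (m x y).-1 else m x y.

Definition two_edge_connected m :=
  connected_mg m /\ forall a b, 0 < m a b -> connected_mg (remove_edge m a b).

Definition claw_free m := forall x a b c : T,
  adj m x a -> adj m x b -> adj m x c ->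
  a != b -> a != c -> b != c ->
  adj m a b || adj m a c || adj m b c.

(* diamond-free: no induced K_4 - e: vertices a b c d distinct,
   a,b adjacent to each other and to c and d, c d non-adjacent *)
Definition diamond_free m := forall a b c d : T,
  uniq [:: a; b; c; d] ->
  adj m a b -> adj m a c -> adj m a d -> adj m b c -> adj m b d ->
  adj m c d.

Definition closed_nbhd m S : {set T} := S :|: [set w | [exists v in S, adj m v w]].

Definition prop_step m X : {set T} :=
  X :|: [set w | [exists v in X,
           adj m v w && (w \notin X) &&
           [forall z, (adj m v z && (z \notin X)) ==> (z == w)]]].

Definition power_dominating m S :=
  exists k, iter k (prop_step m) (closed_nbhd m S) = [set: T].

(* power domination number: minimum size of a power dominating set
   (setT is always one, of size #|T|) *)
Definition gammaP m : nat :=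
  \big[minn/#|T|]_(S : {set T} | `[< power_dominating m S >]) #|S|.

End Multigraph.

(* Main.v *)
Require Import Defs.
From mathcomp Require Import all_boot zify.
From mathcomp Require Import boolp.
Set Implicit Arguments. Unset Strict Implicit. Unset Printing Implicit Defensive.


Lemma bigmin_le (I : finType) (P : pred I) (F : I -> nat) x0 j :
  P j -> \big[minn/x0]_(i | P i) F i <= F j.
Proof.
move=> Pj; have := mem_index_enum j.
elim: (index_enum I) => // a r IH; rewrite inE big_cons.
case: eqP => [<- _|_ /IH H]; first by rewrite Pj geq_minl.
by case: (P a) => //; rewrite geq_min H orbT.
Qed.

Lemma closed_connect_in (T : finType) (e : rel T) (C : {set T}) x y :
  (forall a b, a \in C -> e a b -> b \in C) -> connect e x y -> x \in C -> y \in C.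
Proof.
move=> HC /connectP [p Hp ->]; elim: p x Hp => //= a p IH x /andP [exa Hp] xC.
exact: IH Hp (HC _ _ xC exa).
Qed.

Lemma invol_even (T : finType) (f : T -> T) :
  (forall x, f (f x) = x) -> (forall x, f x != x) -> ~~ odd #|T|.
Proof.
move=> finv fnf.
suff H : forall n (A : {set T}), #|A| <= n -> (forall x, x \in A -> f x \in A) -> ~~ odd #|A|.
  by rewrite -cardsT; apply: (H #|T|) => //; rewrite cardsT.
elim=> [|n IH] A; first by rewrite leqn0 => /eqP ->.
move=> Hc HA; case: (set_0Vmem A) => [->|[x xA]]; first by rewrite cards0.
have fxA := HA x xA.
set B := A :\ x :\ f x.
have HB : #|A| = #|B|.+2.
  rewrite (cardsD1 x A) xA (cardsD1 (f x) (A :\ x)) in_setD1 fxA fnf /=.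
  by rewrite /B; lia.
have : ~~ odd #|B|.
  apply: IH; first by lia.
  move=> y; rewrite !in_setD1 => /and3P [yfx yx yA].
  rewrite HA // andbT; apply/andP; split.
    by apply: contra yx => /eqP E; rewrite -(finv y) E finv.
  by apply: contra yfx => /eqP E; rewrite -E finv.
by rewrite HB /= negbK.
Qed.

Lemma my_iter_sub (T : finType) (f : {set T} -> {set T}) (X : {set T}) (k : nat) :
  (forall Y : {set T}, Y \subset f Y) -> X \subset iter k f X.
Proof.
move=> ext; elim: k => //= k IH; exact: subset_trans IH (ext _).
Qed.

Lemma my_iter_fix (T : finType) (f : {set T} -> {set T}) (X : {set T}) :
  (forall Y : {set T}, Y \subset f Y) -> f (iter #|T| f X) = iter #|T| f X.
Proof.
move=> ext.
have H : forall k, iter k f X != iter k.+1 f X -> k < #|iter k.+1 f X|.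
  elim=> [|k IH] Hne.
    have : iter 0 f X \proper iter 1 f X by rewrite properEneq Hne ext.
    move/proper_card; lia.
  have Hne' : iter k f X != iter k.+1 f X.
    apply: contra Hne => /eqP E.
    have E' : f (iter k f X) = iter k f X by rewrite [RHS]E.
    by rewrite /= !E'.
  have := IH Hne'.
  have : iter k.+1 f X \proper iter k.+2 f X by rewrite properEneq Hne ext.
  move/proper_card; lia.
apply/eqP; apply: contraT => Hne.
have := H #|T|; rewrite eq_sym Hne => /(_ isT).
have := max_card (iter #|T|.+1 f X); lia.
Qed.


Lemma prop_ext (T : finType) (m : T -> T -> nat) (Y : {set T}) : Y \subset prop_step m Y.
Proof. exact: subsetUl. Qed.

Lemma fix_rule (T : finType) (m : T -> T -> nat) (F : {set T}) :
  prop_step m F = F -> forall x z, x \in F -> adj m x z ->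
  (forall y, adj m x y -> (y \in F) || (y == z)) -> z \in F.
Proof.
move=> Hf x z xF xz Hy; case: (boolP (z \in F)) => // zF.
suff : z \in prop_step m F by rewrite Hf (negbTE zF).
rewrite inE; apply/orP; right; rewrite inE; apply/existsP; exists x.
rewrite xF xz zF /=; apply/forallP => y; apply/implyP => /andP [xy yF].
by have := Hy y xy; rewrite (negbTE yF).
Qed.

Section Perc.
Variables (T : finType) (adj : rel T) (U : T -> {set T}) (ext : T -> T).
Hypotheses (adjC : forall x y, adj x y = adj y x)
  (HU1 : forall x, x \in U x)
  (HU2 : forall x y, y \in U x -> U y = U x)
  (HU4 : forall x y z, y \in U x -> z \in U x -> y != z -> adj y z)
  (Hext1 : forall x, adj x (ext x))
  (Hext2 : forall x, ext x \notin U x)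
  (Hext3 : forall x z, adj x z -> (z \in U x) \/ z = ext x)
  (Hsize : forall x, 2 <= #|U x|).

Lemma extext y : ext (ext y) = y.
Proof.
have := Hext1 y; rewrite adjC => /Hext3 [yU|//].
by have := Hext2 y; rewrite (HU2 yU) HU1.
Qed.

Lemma perc (key : {set T} -> nat) (kinj : injective key) (F : {set T}) :
  (forall x z, x \in F -> adj x z -> (forall y, adj x y -> (y \in F) || (y == z)) -> z \in F) ->
  (forall x, #|[set y in U x | key (U x) < key (U (ext y))]| + 2 <= #|U x| -> U x \subset F) ->
  forall x, x \in F.
Proof.
move=> Ffix Hch x0; apply/negPn/negP => x0F.
case: (arg_maxnP (fun x => key (U x)) (P := fun x => x \notin F) x0F) => x xF xmax.
have later : forall z, key (U x) < key (U z) -> z \in F.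
  move=> z; case: (boolP (z \in F)) => // /xmax; lia.
set A := U x; set L := [set y in A | key A < key (U (ext y))].
have eF : forall y, y \in L -> U (ext y) \subset F.
  move=> y; rewrite inE => /andP [yA ky]; apply/subsetP => z zU.
  by apply: later; rewrite (HU2 zU).
have LF : L \subset F.
  apply/subsetP => y yL.
  apply: (Ffix (ext y)); first by apply: (subsetP (eF _ yL)); exact: HU1.
    by rewrite adjC.
  move=> z /Hext3 [zU|->]; first by rewrite (subsetP (eF _ yL)).
  by rewrite extext eqxx orbT.
have notch : #|A| <= #|L| + 1.
  rewrite leqNgt; apply/negP => Hc.
  have := Hch x; rewrite -/A -/L => /(_ ltac:(lia)) /subsetP /(_ x (HU1 x)).
  by rewrite (negbTE xF).
have LA : L \subset A :\ x.
  apply/subsetP => y yL; rewrite in_setD1.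
  have := (subsetP LF) y yL; rewrite inE in yL; case/andP: yL => yA _.
  by case: eqP => [->|]; rewrite ?(negbTE xF) ?yA.
have LeqA : L = A :\ x.
  apply/eqP; rewrite eqEcard LA /=.
  have := cardsD1 x A; rewrite HU1; lia.
have : 0 < #|A :\ x| by have := cardsD1 x A; have := Hsize x; rewrite HU1 /A; lia.
case/card_gt0P => y yAx.
have yL : y \in L by rewrite LeqA.
have yF := (subsetP LF) y yL.
move: yAx; rewrite in_setD1 => /andP [yx yA].
have Uy : U y = A := HU2 yA.
have eyF : ext y \in F by apply: (subsetP (eF _ yL)); exact: HU1.
have : x \in F.
  apply: (Ffix y) => //.
    by apply: (HU4 (x := x)) => //; exact: HU1.
  move=> z /Hext3 [zU|->]; last by rewrite eyF.
  case: (eqVneq z x) => [_|zx]; first by rewrite orbT.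
  by rewrite (subsetP LF) // LeqA in_setD1 zx -Uy.
by rewrite (negbTE xF).
Qed.
End Perc.


Lemma card3 (T : finType) (a b c : T) : a != b -> a != c -> b != c -> #|[set a; b; c]| = 3.
Proof. move=> ab ac bc. rewrite -setUA cardsU1 cards2 !inE bc (negbTE ab) (negbTE ac) //. Qed.

Section G.
Variables (T : finType) (m : T -> T -> nat) (u v : T).
Hypotheses (Hsym : symmetric_mult m) (Hloop : loopless m) (Hcub : cubic m)
  (H2ec : two_edge_connected m) (Huv : u != v) (Hmuv : m u v = 2)
  (Hmult : forall x y : T, 1 < m x y -> (x == u) && (y == v) || (x == v) && (y == u))
  (Hclaw : claw_free m) (Hdia : diamond_free m).

Local Notation adj := (adj m).
Definition N x := [set y | adj x y].
Definition D := [set u; v].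

Lemma adjC x y : adj x y = adj y x.
Proof. by rewrite /adj eq_sym Hsym. Qed.
Lemma adj_irr x : adj x x = false.
Proof. by rewrite /adj eqxx. Qed.
Lemma adj_neq x y : adj x y -> x != y.
Proof. by case/andP. Qed.
Lemma adj_pos x y : adj x y -> 0 < m x y.
Proof. by case/andP. Qed.

Lemma sum_le3 x (A : {set T}) : \sum_(y in A) m x y <= 3.
Proof.
rewrite -(Hcub x) big_mkcond /=; apply: leq_sum => y _; by case: ifP.
Qed.

Lemma cardN_le x : #|N x| <= \sum_(y in N x) m x y.
Proof. rewrite -sum1_card; apply: leq_sum => y; rewrite inE; exact: adj_pos. Qed.

Lemma cardN_le3 x : #|N x| <= 3.
Proof. exact: leq_trans (cardN_le x) (sum_le3 x _). Qed.

Lemma mle1 x y : x \notin D -> m x y <= 1.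
Proof.
move=> xD; rewrite leqNgt; apply/negP => /Hmult.
move: xD; rewrite !inE negb_or => /andP [xu xv].
by rewrite (negbTE xu) (negbTE xv).
Qed.

Lemma cardN3 x : x \notin D -> #|N x| = 3.
Proof.
move=> xD; rewrite -(Hcub x) -sum1_card big_mkcond; apply: eq_bigr => y _ /=.
rewrite inE /adj; case: (eqVneq x y) => [<-|_]; first by rewrite Hloop.
have := mle1 y xD; by case: (m x y) => [|[|]].
Qed.

Lemma nb_exists a b : a != b -> m a b = 2 ->
  exists w, [/\ N a = [set b; w], w != b & w != a].
Proof.
move=> ab Hab.
have : exists w, (w != b) && (0 < m a w).
  apply/existsP; apply: contraT; rewrite negb_exists => /forallP H.
  have := Hcub a; rewrite (bigD1 b) //= Hab big1 // => y /= yb.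
  by have := H y; rewrite yb /=; case: (m a y).
case=> w /andP [wb pw].
have wa : w != a by apply: contraTneq pw => ->; rewrite Hloop.
have adw : adj a w by rewrite /adj eq_sym wa pw.
have adb : adj a b by rewrite /adj ab Hab.
exists w; split => //.
have bN : b \in N a by rewrite inE.
have Hle : #|N a| <= 2.
  have := sum_le3 a (N a); rewrite (big_setD1 b bN) /= Hab.
  have : #|N a :\ b| <= \sum_(y in N a :\ b) m a y.
    rewrite -sum1_card; apply: leq_sum => y; rewrite in_setD1 inE => /andP [_]; exact: adj_pos.
  have := cardsD1 b (N a); rewrite bN; lia.
apply/eqP; rewrite eq_sym eqEcard cards2 eq_sym wb.
rewrite (leq_trans Hle) // andbT; apply/subsetP => y; rewrite !inE.
by case/orP => /eqP ->.
Qed.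

Lemma bridge (C : {set T}) b c : b \in C -> c \notin C -> adj b c -> m b c <= 1 ->
  (forall y z, y \in C -> adj y z -> (z \in C) || ((y == b) && (z == c))) -> False.
Proof.
move=> bC cC bc mbc HC.
have [_ H2] := H2ec.
have Hc := H2 b c (adj_pos bc) b c.
apply: (negP cC); apply: closed_connect_in Hc bC => y z yC.
rewrite /Defs.adj /remove_edge => /andP [yz].
case: ifP => [cond|ncond] pos.
  move: cond; case/orP => /andP [/eqP yb /eqP zc].
    by move: pos; rewrite yb zc; case: (m b c) mbc => [|[|]].
  by move: cC; rewrite -yb yC.
have := HC y z yC; rewrite /Defs.adj yz pos => /(_ isT) /orP [//|bc'].
by move: ncond; rewrite bc'.
Qed.


Lemma nb3 x a b c z : a != b -> a != c -> b != c -> adj x a -> adj x b -> adj x c ->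
  adj x z -> z \in [set a; b; c].
Proof.
move=> ab ac bc xa xb xc xz; apply: contraT => zn.
have : z |: [set a; b; c] \subset N x.
  apply/subsetP => y; rewrite !inE.
  by case/orP => [/eqP->//|]; case/orP => [/orP [] |] /eqP ->.
move/subset_leq_card; rewrite cardsU1 zn card3 //.
by have := cardN_le3 x; lia.
Qed.

Section G2.
Variables (w w2 : T).
Hypotheses (Nu : N u = [set v; w]) (Nv : N v = [set u; w2])
  (wv : w != v) (wu : w != u) (w2u : w2 != u) (w2v : w2 != v).

Lemma adj_u z : adj u z = (z == v) || (z == w).
Proof. have E : (z \in N u) = (z \in [set v; w]) by rewrite Nu. by move: E; rewrite !inE. Qed.
Lemma adj_v z : adj v z = (z == u) || (z == w2).
Proof. have E : (z \in N v) = (z \in [set u; w2]) by rewrite Nv. by move: E; rewrite !inE. Qed.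

Lemma deg2 a x y z : a \in D -> x != y -> x != z -> y != z -> adj a x -> adj a y -> adj a z -> False.
Proof.
rewrite !inE => /orP [] /eqP -> xy xz yz; rewrite ?adj_u ?adj_v.
  case/orP => /eqP Ex; case/orP => /eqP Ey; case/orP => /eqP Ez;
  by move: xy xz yz; rewrite Ex Ey Ez eqxx.
case/orP => /eqP Ex; case/orP => /eqP Ey; case/orP => /eqP Ez;
by move: xy xz yz; rewrite Ex Ey Ez eqxx.
Qed.

Lemma K4 y p q r : p != q -> p != r -> q != r ->
  adj y p -> adj y q -> adj y r -> adj p q -> adj p r -> False.
Proof.
move=> pq pr qr yp yq yr apq apr.
have yp' := adj_neq yp; have yq' := adj_neq yq; have yr' := adj_neq yr.
have aqr : adj q r.
  apply: (Hdia (a := y) (b := p)) => //.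
  by rewrite /= !inE !negb_or yp' yq' yr' pq pr qr.
have py := yp; rewrite adjC in py. have qy := yq; rewrite adjC in qy.
have ry := yr; rewrite adjC in ry. have qp := apq; rewrite adjC in qp.
have rp := apr; rewrite adjC in rp. have rq := aqr; rewrite adjC in rq.
have py' := adj_neq py; have qy' := adj_neq qy; have ry' := adj_neq ry.
have qp' := adj_neq qp; have rp' := adj_neq rp; have rq' := adj_neq rq.
set K := [set y; p; q; r].
have HK : forall a b, a \in K -> adj a b -> b \in K.
  move=> a b aK ab.
  have sub : forall s1 s2 s3, s1 \in K -> s2 \in K -> s3 \in K -> b \in [set s1; s2; s3] -> b \in K.
    move=> s1 s2 s3 h1 h2 h3 hb; move: hb h1 h2 h3; rewrite !inE.
    by case/orP => [/orP []|] /eqP -> h1 h2 h3.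
  have aK' : [|| a == y, a == p, a == q | a == r] by move: aK; rewrite /K !inE -!orbA.
  have mK : forall s, s \in [:: y; p; q; r] -> s \in K by move=> s; rewrite /K !inE -!orbA.
  case/or4P: aK' => /eqP E; rewrite E in ab.
  - apply: (sub p q r); try (apply: mK; by rewrite !inE eqxx ?orbT). exact: nb3 ab.
  - apply: (sub y q r); try (apply: mK; by rewrite !inE eqxx ?orbT). exact: nb3 ab.
  - apply: (sub y p r); try (apply: mK; by rewrite !inE eqxx ?orbT). exact: nb3 ab.
  - apply: (sub y p q); try (apply: mK; by rewrite !inE eqxx ?orbT). exact: nb3 ab.
have uK : u \in K.
  apply: (closed_connect_in HK (H2ec.1 y u)); by rewrite !inE eqxx.
have uD : u \in D by rewrite !inE eqxx.
rewrite !inE in uK.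
case/orP: uK => [/orP [/orP []|]|] /eqP E; rewrite -E in yp yq yr apq apr aqr py qy ry qp rp rq.
- exact: (deg2 uD pq pr qr yp yq yr).
- exact: (deg2 uD yq' yr' qr py apq apr).
- exact: (deg2 uD yp' yr' pr qy qp aqr).
- exact: (deg2 uD yp' yq' pq ry rp rq).
Qed.


Lemma wD : w \notin D. Proof. by rewrite !inE negb_or wu wv. Qed.
Lemma w2D : w2 \notin D. Proof. by rewrite !inE negb_or w2u w2v. Qed.

Lemma w_neq : w != w2.
Proof.
apply/negP => /eqP E.
have wuA : adj w u by rewrite adjC adj_u eqxx orbT.
have wvA : adj w v by rewrite adjC adj_v E eqxx orbT.
have : ~~ (N w \subset D).
  apply/negP => /subset_leq_card; rewrite cardN3 ?wD // cards2 Huv //.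
case/subsetPn => c; rewrite inE => wc cD.
move: cD; rewrite !inE negb_or => /andP [cu cv].
have cw : c != w by rewrite eq_sym; exact: adj_neq wc.
apply: (bridge (C := [set u; v; w]) (b := w) (c := c)) => //.
- by rewrite !inE eqxx orbT.
- by rewrite !inE !negb_or cu cv cw.
- exact: mle1 wD.
move=> y z; rewrite !inE -!orbA => /or3P [] /eqP -> H.
- by move: H; rewrite adj_u => /orP [] /eqP ->; rewrite eqxx ?orbT.
- by move: H; rewrite adj_v -E => /orP [] /eqP ->; rewrite eqxx ?orbT.
- have uc : u != c by rewrite eq_sym.
  have vc : v != c by rewrite eq_sym.
  have := nb3 Huv uc vc wuA wvA wc H.
  by rewrite !inE -!orbA => /or3P [] /eqP ->; rewrite !eqxx ?orbT.
Qed.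

Lemma notri a b c : adj a b -> adj a c -> adj b c -> a \in D -> False.
Proof.
move=> ab ac bc; have bc' := adj_neq bc.
rewrite !inE => /orP [] /eqP Ea; rewrite Ea ?adj_u ?adj_v in ab ac.
- have vw : adj v w.
    move: bc bc'; case/orP: ab => /eqP ->; case/orP: ac => /eqP ->; rewrite ?eqxx //.
    by rewrite adjC.
  move: vw; rewrite adj_v => /orP [] /eqP E.
    by move: wu; rewrite E eqxx.
  by move: w_neq; rewrite E eqxx.
- have uw : adj u w2.
    move: bc bc'; case/orP: ab => /eqP ->; case/orP: ac => /eqP ->; rewrite ?eqxx //.
    by rewrite adjC.
  move: uw; rewrite adj_u => /orP [] /eqP E.
    by move: w2v; rewrite E eqxx.
  by move: w_neq; rewrite E eqxx.
Qed.

Lemma tri x : x \notin D -> exists p q c,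
  [/\ adj x p, adj x q, adj x c, adj p q & [&& p != q, p != c & q != c]].
Proof.
move=> xD.
have : 0 < #|N x| by rewrite cardN3.
case/card_gt0P => p; rewrite inE => xp.
have : #|N x :\ p| == 2.
  by have := cardsD1 p (N x); rewrite cardN3 // inE xp /= => H; apply/eqP; lia.
case/cards2P => q [c [qc E]].
have : q \in N x :\ p by rewrite E !inE eqxx.
have : c \in N x :\ p by rewrite E !inE eqxx orbT.
rewrite !in_setD1 !inE => /andP [cp xc] /andP [qp xq].
rewrite eq_sym in cp; rewrite eq_sym in qp.
have := Hclaw xp xq xc qp cp qc.
case/orP => [/orP []|] H.
- by exists p, q, c; rewrite qp cp qc.
- by exists p, c, q; rewrite cp qp eq_sym qc.
- by exists q, c, p; rewrite qc eq_sym qp eq_sym cp.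
Qed.

Definition U x := if x \in D then D
  else x |: [set y | adj x y && [exists z, adj x z && adj y z]].

Lemma Utri x p q : x \notin D -> p != q -> adj x p -> adj x q -> adj p q ->
  U x = [set x; p; q].
Proof.
move=> xD pq xp xq apq; apply/setP => y; rewrite /U (negbTE xD) !inE -orbA.
case: (eqVneq y x) => //= yx.
apply/idP/idP.
  case/andP => xy /existsP [z /andP [xz yz]].
  apply: contraT; rewrite negb_or => /andP [yp yq].
  have := nb3 (negbT (negbTE yp) : y != p) yq pq xy xp xq xz.
  rewrite !inE -!orbA => /or3P [] /eqP Ez.
  - by move: yz; rewrite Ez adj_irr.
  - rewrite Ez adjC in yz.
    exfalso; apply: (K4 (y := x) (p := p) (q := y) (r := q)) => //; by rewrite eq_sym.
  - rewrite Ez adjC in yz.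
    exfalso; apply: (K4 (y := x) (p := q) (q := y) (r := p)) => //; by rewrite ?(eq_sym q) ?(adjC q).
case/orP => /eqP ->.
  by rewrite xp /=; apply/existsP; exists q; rewrite xq apq.
by rewrite xq /=; apply/existsP; exists p; rewrite xp adjC apq.
Qed.


Lemma U_D x : x \in D -> U x = D.
Proof. by rewrite /U => ->. Qed.

Lemma HU1 x : x \in U x.
Proof. by rewrite /U; case: ifP => // _; rewrite setU11. Qed.

Lemma Uspec x : x \notin D -> exists p q c,
  [/\ U x = [set x; p; q], adj x p, adj x q, adj x c & [&& adj p q, p != q, p != c & q != c]].
Proof.
move=> xD; have [p [q [c [xp xq xc pq /and3P [pq' pc qc]]]]] := tri xD.
exists p, q, c; rewrite (Utri xD pq' xp xq pq); split => //.
by rewrite pq pq' pc qc.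
Qed.

Lemma adj_uv : adj u v.
Proof. by rewrite /Defs.adj Huv Hmuv. Qed.

Lemma HU2 x y : y \in U x -> U y = U x.
Proof.
case: (boolP (x \in D)) => xD.
  by rewrite (U_D xD) => yD; rewrite !U_D.
have [p [q [c [E xp xq xc /and4P [pq pq' pc qc]]]]] := Uspec xD.
rewrite E !inE -!orbA => /or3P [] /eqP ->.
- by rewrite E.
- have pD : p \notin D.
    by apply/negP => pD; apply: (notri (a := p) (b := x) (c := q)); rewrite // adjC.
  have px : adj p x by rewrite adjC.
  rewrite (Utri pD (adj_neq xq) px pq xq).
  by apply/setP => z; rewrite !inE; case: (z == p); case: (z == x).
- have qD : q \notin D.
    apply/negP => qD; apply: (notri (a := q) (b := x) (c := p)) => //; by rewrite adjC.
  have qx : adj q x by rewrite adjC.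
  have qp : adj q p by rewrite adjC.
  rewrite (Utri qD (adj_neq xp) qx qp xp).
  by apply/setP => z; rewrite !inE; case: (z == p); case: (z == x); case: (z == q).
Qed.

Lemma HU4 x y z : y \in U x -> z \in U x -> y != z -> adj y z.
Proof.
case: (boolP (x \in D)) => xD.
  rewrite (U_D xD) !inE => /orP [] /eqP -> /orP [] /eqP ->; rewrite ?eqxx // => _.
    exact: adj_uv.
  by rewrite adjC adj_uv.
have [p [q [c [E xp xq xc /and4P [pq pq' pc qc]]]]] := Uspec xD.
rewrite E !inE -!orbA => /or3P [] /eqP -> /or3P [] /eqP ->; rewrite ?eqxx // => _;
  by rewrite ?xp ?xq ?pq // adjC ?xp ?xq ?pq.
Qed.

Lemma Usize x : #|U x| = if x \in D then 2 else 3.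
Proof.
case: (boolP (x \in D)) => xD; first by rewrite (U_D xD) cards2 Huv.
have [p [q [c [E xp xq xc /and4P [pq pq' pc qc]]]]] := Uspec xD.
by rewrite E card3 // adj_neq.
Qed.

Lemma ext_spec x : exists c, forall z, (adj x z && (z \notin U x)) = (z == c).
Proof.
case: (boolP (x \in D)) => xD.
  rewrite (U_D xD); move: xD; rewrite /D !inE => /orP [] /eqP ->.
    exists w => z; rewrite adj_u !inE.
    case: (eqVneq z v) => [->|zv]; first by rewrite ?orbT ?orbF /= ?(negbTE wu) ?(negbTE wv) ?(negbTE w2u) ?(negbTE w2v) // eq_sym ?(negbTE wv) ?(negbTE w2u).
    case: (eqVneq z w) => [->|zw]; by rewrite ?orbT ?orbF /= ?(negbTE wu) ?(negbTE wv) ?(negbTE w2u) ?(negbTE w2v) // eq_sym ?(negbTE wv) ?(negbTE w2u).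
  exists w2 => z; rewrite adj_v !inE.
  case: (eqVneq z u) => [->|zu]; first by rewrite ?orbT ?orbF /= ?(negbTE wu) ?(negbTE wv) ?(negbTE w2u) ?(negbTE w2v) // eq_sym ?(negbTE wv) ?(negbTE w2u).
  case: (eqVneq z w2) => [->|zw]; by rewrite ?orbT ?orbF /= ?(negbTE wu) ?(negbTE wv) ?(negbTE w2u) ?(negbTE w2v) // eq_sym ?(negbTE wv) ?(negbTE w2u).
have [p [q [c [E xp xq xc /and4P [pq pq' pc qc]]]]] := Uspec xD.
exists c => z; rewrite E !inE.
case: (eqVneq z c) => [->|zc].
  have cx : (c == x) = false by rewrite eq_sym; apply/negbTE; exact: adj_neq xc.
  by rewrite xc cx (eq_sym c p) (negbTE pc) (eq_sym c q) (negbTE qc).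
apply/negbTE; rewrite negb_and negbK; apply/orP.
case: (boolP (adj x z)) => xz; last by left.
right; have := nb3 pq' pc qc xp xq xc xz; rewrite !inE (negbTE zc) orbF.
by rewrite -orbA => ->; rewrite orbT.
Qed.

Definition ext x := odflt x [pick z | adj x z && (z \notin U x)].

Lemma ext_ok x z : (adj x z && (z \notin U x)) = (z == ext x).
Proof.
have [c Hc] := ext_spec x.
have -> : ext x = c.
  rewrite /ext; case: pickP => [y Hy|Hn] /=; first by apply/eqP; rewrite -Hc.
  by have := Hn c; rewrite Hc eqxx.
exact: Hc.
Qed.

Lemma Hext1 x : adj x (ext x).
Proof. by have := ext_ok x (ext x); rewrite eqxx => /andP []. Qed.
Lemma Hext2 x : ext x \notin U x.
Proof. by have := ext_ok x (ext x); rewrite eqxx => /andP []. Qed.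
Lemma Hext3 x z : adj x z -> (z \in U x) \/ z = ext x.
Proof.
move=> xz; case: (boolP (z \in U x)) => zU; [by left|right].
by apply/eqP; rewrite -ext_ok xz.
Qed.

Lemma Hsize2 x : 2 <= #|U x|.
Proof. by rewrite Usize; case: ifP. Qed.
Lemma Hsize3 x : #|U x| <= 3.
Proof. by rewrite Usize; case: ifP. Qed.

Definition P := [set U x | x : T].
Definition rep (A : {set T}) := odflt u [pick y in A].
Definition Lk (k : {set T} -> nat) (A : {set T}) := [set y in A | k A < k (U (ext y))].
Definition Sk (k : {set T} -> nat) := [set A in P | #|Lk k A| + 2 <= #|A|].
Definition Xk k := [set rep A | A in Sk k].

Lemma rep_in x : rep (U x) \in U x.
Proof.
rewrite /rep; case: pickP => [y //|H]; by have := H x; rewrite HU1.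
Qed.

Lemma PD (k : {set T} -> nat) : injective k -> power_dominating m (Xk k).
Proof.
move=> kinj.
set F := iter #|T| (prop_step m) (closed_nbhd m (Xk k)).
have Hfix : prop_step m F = F by exact: (my_iter_fix _ (@prop_ext T m)).
have sub : closed_nbhd m (Xk k) \subset F by apply: my_iter_sub; exact: prop_ext.
have allF : forall x, x \in F.
  apply: (perc (adj := adj) (U := U) (ext := ext) adjC HU1 HU2 HU4 Hext1 Hext2 Hext3 Hsize2 kinj).
    exact: fix_rule.
  move=> x Hc; apply/subsetP => z zU.
  have SA : U x \in Sk k by rewrite inE imset_f.
  have rX : rep (U x) \in Xk k by apply: imset_f.
  apply: (subsetP sub); rewrite /closed_nbhd inE.
  case: (eqVneq (rep (U x)) z) => [<-|rz]; first by rewrite rX.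
  apply/orP; right; rewrite inE; apply/existsP; exists (rep (U x)); rewrite rX /=.
  exact: (HU4 (rep_in x) zU rz).
exists #|T|; apply/setP => x; by rewrite inE allF.
Qed.

Lemma gam_le k : injective k -> gammaP m <= #|Sk k|.
Proof.
move=> kinj; apply: leq_trans (leq_imset_card rep _).
rewrite /gammaP; apply: bigmin_le.
apply: asboolT; exact: PD.
Qed.


Definition k1 (A : {set T}) : nat := enum_rank A.
Definition k2 (A : {set T}) : nat := #|{set T}| - enum_rank A.

Lemma rank_lt (A : {set T}) : (enum_rank A : nat) < #|{set T}|.
Proof. exact: ltn_ord. Qed.

Lemma k1_inj : injective k1.
Proof. by move=> A B /ord_inj /enum_rank_inj. Qed.

Lemma k2_inj : injective k2.
Proof.
move=> A B; rewrite /k2 => H; apply: k1_inj; rewrite /k1.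
have := rank_lt A; have := rank_lt B; lia.
Qed.

Lemma S_disj : #|Sk k1| + #|Sk k2| <= #|P|.
Proof.
have H0 : Sk k1 :&: Sk k2 = set0.
  apply/setP => A; rewrite !inE; apply/negbTE/negP => /andP [/andP [AP c1] /andP [_ c2]].
  case/imsetP: AP => x _ E; rewrite E in c1 c2.
  have cov : U x \subset Lk k1 (U x) :|: Lk k2 (U x).
    apply/subsetP => y yU; rewrite !inE yU /=.
    have ne : U (ext y) != U x.
      apply: contra (Hext2 y) => /eqP E'; by rewrite (HU2 yU) -E' HU1.
    have ne' : k1 (U x) != k1 (U (ext y)).
      by apply: contra ne => /eqP /k1_inj ->.
    have h1 := rank_lt (U x); have h2 := rank_lt (U (ext y)).
    move: ne'; rewrite /k1 /k2 => ne'.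
    case: (ltngtP (enum_rank (U x)) (enum_rank (U (ext y)))) => h.
    - by [].
    - apply/orP; right; lia.
    - by rewrite h eqxx in ne'.
  have := subset_leq_card cov; rewrite cardsU; have := Hsize3 x; lia.
have := cardsU (Sk k1) (Sk k2); rewrite H0 cards0 subn0 => <-.
apply: subset_leq_card; apply/subsetP => A; rewrite !inE.
by case/orP => /andP [].
Qed.

Lemma DP : D \in P.
Proof. by rewrite -(U_D (x := u)) ?imset_f // !inE eqxx. Qed.

Lemma countT : #|T| + 1 = 3 * #|P|.
Proof.
have part : partition P [set: T].
  apply/and3P; split.
  - apply/eqP/setP => x; rewrite inE cover_imset; apply/bigcupP; exists x => //; exact: HU1.
  - apply/trivIsetP => A B /imsetP [x _ ->] /imsetP [y _ ->] neq.
    rewrite -setI_eq0; apply/eqP/setP => z; rewrite !inE; apply/negbTE/negP => /andP [zx zy].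
    by move: neq; rewrite -(HU2 zx) -(HU2 zy) eqxx.
  - apply/imsetP => [[x _ E]]; have := HU1 x; by rewrite -E inE.
have := card_partition part; rewrite cardsT => ->.
rewrite (big_setD1 D DP) /=.
rewrite (eq_bigr (fun _ => 3)); last first.
  move=> A; rewrite in_setD1 => /andP [AD /imsetP [x _ E]]; rewrite E in AD *.
  rewrite Usize; case: ifP => // xD.
  by move: AD; rewrite (U_D xD) eqxx.
rewrite sum_nat_const /D cards2 Huv.
have := cardsD1 D P; rewrite DP /D /=; lia.
Qed.

Lemma extext' y : ext (ext y) = y.
Proof.
have := Hext1 y; rewrite adjC => /Hext3 [yU|//].
by have := Hext2 y; rewrite (HU2 yU) HU1.
Qed.

Lemma extneq x : ext x != x.
Proof. apply: contraNneq (Hext2 x) => ->; exact: HU1. Qed.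

Lemma main_G2 : 6 * gammaP m + 2 <= #|T|.
Proof.
have g1 := gam_le k1_inj; have g2 := gam_le k2_inj; have d := S_disj.
have c := countT; have e := invol_even extext' extneq.
have := odd_double_half #|T|; rewrite (negbTE e) add0n -muln2 => h.
lia.
Qed.

End G2.

Lemma main_G : 6 * gammaP m + 2 <= #|T|.
Proof.
have [w [Nu wv wu]] := @nb_exists u v Huv Hmuv.
have Hvu : m v u = 2 by rewrite Hsym.
have Hvu2 : v != u by rewrite eq_sym.
have [w2 [Nv w2u w2v]] := @nb_exists v u Hvu2 Hvu.
by apply: (main_G2 (w := w) (w2 := w2)).
Qed.

End G.


Theorem corollary2p7 (T : finType) (m : T -> T -> nat) (u v : T) :
  symmetric_mult m -> loopless m -> cubic m ->
  two_edge_connected m ->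
  u != v -> m u v = 2 ->
  (forall x y : T, 1 < m x y -> (x == u) && (y == v) || (x == v) && (y == u)) ->
  claw_free m -> diamond_free m ->
  6 * gammaP m + 2 <= #|T|.
Proof.
intros; eapply main_G; eauto.
Qed.

Print Assumptions corollary2p7.
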